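(* Let $n$ be a positive integer and let $L_3(n)$ denote the number of $3\times n$ Latin rectangles. For $s:\{0,1\}^3\to\mathbb{Z}_{\ge 0}$, written $s_\varepsilon$ for $\varepsilon=\varepsilon_1\varepsilon_2\varepsilon_3\in\{0,1\}^3$, and nonempty $J\subseteq\{1,2,3\}$, let $f_J=\sum_{\varepsilon:\ \varepsilon_j=0\text{ for all } j\in J}s_\varepsilon$ (so e.g. $f_{\{1\}}=s_{000}+s_{010}+s_{001}+s_{011}$, $f_{\{1,2\}}=s_{000}+s_{001}$, $f_{\{1,2,3\}}=s_{000}$). Then \[ L_3(n)=\sum_{s}(-1)^{\sum_\varepsilon|\varepsilon|\,s_\varepsilon}\frac{n!}{\prod_\varepsilon s_\varepsilon!}\big[f_{\{1\}}f_{\{2\}}f_{\{3\}}-f_{\{1,2\}}f_{\{3\}}-f_{\{2,3\}}f_{\{1\}}-f_{\{1,3\}}f_{\{2\}}+2f_{\{1,2,3\}}\big]^n, \] where the sum runs over all $s:\{0,1\}^3\to\mathbb{Z}_{\ge0}$ with $\sum_\varepsilon s_\varepsilon=n$ and $|\varepsilon|=\varepsilon_1+\varepsilon_2+\varepsilon_3$.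
   Context: A $k\times n$ Latin rectangle is a $k\times n$ matrix with entries in $\{1,\dots,n\}$ such that no row and no column contains a repeated entry (so each row is a permutation of $\{1,\dots,n\}$). The convention $0^0=1$ is used. *)

(* Defs.v *)
From mathcomp Require Import all_boot all_order all_algebra.
Set Implicit Arguments. Unset Strict Implicit. Unset Printing Implicit Defensive.
Import GRing.Theory Num.Theory.

(* A k x n Latin rectangle, with symbols 'I_n (= {0,..,n-1}, a relabelling of {1,..,n}):
   every row is injective (hence a permutation of 'I_n) and every column is injective. *)
Definition latin_rect (k n : nat) (M : 'M['I_n]_(k, n)) : bool :=
  [forall i : 'I_k, injectiveb (fun j : 'I_n => M i j)] &&
  [forall j : 'I_n, injectiveb (fun i : 'I_k => M i j)].

Definition L (k n : nat) : nat := #|[pred M : 'M['I_n]_(k, n) | latin_rect M]|.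

(* eps in {0,1}^3, coordinates indexed by 'I_3 (0-based for {1,2,3}); true = 1 *)
Definition eps3 := {ffun 'I_3 -> bool}.

Definition weight (e : eps3) : nat := \sum_(j < 3) (e j : nat).

(* f_J = sum of s_eps over eps with eps_j = 0 for all j in J; J is given as a list
   of 1-based indices in {1,2,3} (coordinate j of the paper is ordinal j-1). *)
Definition fJ (s : eps3 -> nat) (J : seq nat) : nat :=
  \sum_(e : eps3 | [forall j : 'I_3, (j.+1 \in J) ==> ~~ e j]) s e.

(* Main.v *)
Require Import Defs.
From mathcomp Require Import all_boot all_order all_algebra.
From mathcomp Require Import zify ring.
Import GRing.Theory Num.Theory.
Local Open Scope ring_scope.

Set Implicit Arguments. Unset Strict Implicit. Unset Printing Implicit Defensive.

Local Open Scope nat_scope.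

Section Multi.
Variable E : finType.

Definition cnt n (t : {ffun 'I_n -> E}) (e : E) : nat := (\sum_(x : 'I_n) (t x == e))%N.

Definition NN n (s : E -> nat) : nat :=
  (\sum_(t : {ffun 'I_n -> E}) [forall e, cnt t e == s e])%N.

Definition consf n (p : E * {ffun 'I_n -> E}) : {ffun 'I_n.+1 -> E} :=
  [ffun i => if unlift ord0 i is Some j then p.2 j else p.1].
Definition uncons n (t : {ffun 'I_n.+1 -> E}) : E * {ffun 'I_n -> E} :=
  (t ord0, [ffun j => t (lift ord0 j)]).

Lemma consfK n : cancel (@consf n) (@uncons n).
Proof.
case=> e t; rewrite /uncons /consf /= !ffunE unlift_none; congr pair.
by apply/ffunP=> j; rewrite !ffunE liftK.
Qed.
Lemma unconsK n : cancel (@uncons n) (@consf n).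
Proof.
move=> t; apply/ffunP=> i; rewrite /uncons /consf !ffunE.
by case: unliftP => [j ->|->] /=; rewrite ?ffunE.
Qed.

Lemma cnt_cons n e0 (t : {ffun 'I_n -> E}) e :
  cnt (consf (e0, t)) e = ((e0 == e) + cnt t e)%N.
Proof.
rewrite /cnt big_ord_recl /consf ffunE unlift_none /=; congr addn.
by apply: eq_bigr => j _; rewrite ffunE liftK.
Qed.

Lemma NN_S n s : NN n.+1 s =
  (\sum_(e0 | 0 < s e0) NN n (fun e => s e - (e == e0)))%N.
Proof.
rewrite /NN (reindex (@consf n)); last by exists (@uncons n) => x _; [apply: consfK|apply: unconsK].
rewrite -(pair_bigA _ (fun e0 t => [forall e, cnt (consf (e0, t)) e == s e] : nat)) /=.
rewrite [RHS]big_mkcond /=; apply: eq_bigr => e0 _.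
case: ifP => hs.
  apply: eq_bigr => t _; congr nat_of_bool; apply: eq_forallb => e.
  rewrite cnt_cons; case: (eqVneq e0 e) => [<-|ne]; rewrite ?eqxx /=.
    apply/eqP/eqP; lia.
  by rewrite ?subn0 ?add0n.
apply: big1 => t _; apply/eqP; rewrite eqb0; apply/forallP => /(_ e0).
rewrite cnt_cons eqxx; move: hs => /negbT; rewrite -leqNgt leqn0 => /eqP ->.
by [].
Qed.

Lemma multinom n (s : E -> nat) : (\sum_e s e)%N = n ->
  (NN n s * \prod_e (s e)`!)%N = n`!.
Proof.
elim: n s => [|n IH] s hs.
  have s0 : forall e, s e = 0%N.
    by move=> e; apply/eqP; move/eqP: hs; rewrite sum_nat_eq0 => /forallP /(_ e) /implyP; apply.
  rewrite big1 ?muln1; last by move=> e _; rewrite s0.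
  rewrite /NN (eq_bigr (fun _ => 1%N)).
    by rewrite sum1_card card_ffun card_ord expn0.
  by move=> t _; set b := [forall e, _]; suff -> : b by []; apply/forallP => e; rewrite /cnt big_ord0 s0.
rewrite NN_S big_distrl /=.
transitivity (\sum_(e0 | 0 < s e0) (s e0 * n`!))%N.
  apply: eq_bigr => e0 he0.
  have hs' : (\sum_e (s e - (e == e0)))%N = n.
    rewrite (bigD1 e0) //= eqxx.
    rewrite (eq_bigr (fun e => s e)); last by move=> e /negbTE ->; rewrite subn0.
    move: hs; rewrite (bigD1 e0) //=; move: he0; lia.
  rewrite -(IH _ hs') (bigD1 e0 (F := fun e => (s e)`!)) // (bigD1 e0 (F := fun e => (s e - (e==e0))`!)) //= eqxx.
  rewrite [X in (_ = _ * (_ * (_ * X)))%N](eq_bigr (fun e => (s e)`!)); last by move=> e /negbTE ->; rewrite subn0.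
  move: he0; case: (s e0) => // k _; rewrite factS subSS subn0; lia.
rewrite -big_distrl /= factS -hs; congr muln; apply: esym.
rewrite [RHS]big_mkcond; apply: eq_bigr => e _; case: ifP => //.
by move/negbT; rewrite -leqNgt leqn0 => /eqP ->.
Qed.
End Multi.

Local Open Scope ring_scope.

Lemma prod_bool (I : finType) (P : pred I) :
  \prod_i ((P i)%:R : rat) = ([forall i, P i])%:R.
Proof.
case: (boolP [forall i, P i]) => [/forallP H | /forallPn [i Hi]].
  by rewrite big1 // => i _; rewrite H.
by rewrite (bigD1 i) //= (negbTE Hi) mul0r.
Qed.

Lemma inj_surj n (r : 'I_n -> 'I_n) :
  injectiveb r = [forall x, ~~ [forall i, r i != x]].
Proof.
apply/injectiveP/forallP => [inj x | H].
  apply/forallPn; have /codomP [i ->] := injF_onto inj x.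
  by exists i; rewrite negbK.
have Hc : forall x, x \in codom r.
  by move=> x; have /forallPn [i] := H x; rewrite negbK => /eqP <-; apply: codom_f.
have /image_injP inj : #|image r predT| == #|predT : pred 'I_n|.
  rewrite eqn_leq; apply/andP; split; first by exact: max_card.
  by apply: subset_leq_card; apply/subsetP => x _; exact: Hc.
by move=> x y; apply: inj.
Qed.

Definition sg n (u : {ffun 'I_n -> bool}) : rat := \prod_x (if u x then -1 else 1).

Lemma ryser n (r : 'I_n -> 'I_n) :
  ((injectiveb r)%:R : rat) = \sum_(u : {ffun 'I_n -> bool}) sg u * ([forall i, ~~ u (r i)])%:R.
Proof.
pose c x := [forall i, r i != x].
have step : forall u : {ffun 'I_n -> bool}, sg u * ([forall i, ~~ u (r i)])%:R
   = \prod_x (if u x then - ((c x)%:R) else 1).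
  move=> u.
  have -> : [forall i, ~~ u (r i)] = [forall x, u x ==> c x].
    apply/forallP/forallP => [H x | H i].
      apply/implyP => ux; apply/forallP => i; apply/eqP => ri.
      by move: (H i); rewrite ri ux.
    apply/negP => uri; move: (H (r i)); rewrite uri /= => /forallP /(_ i).
    by rewrite eqxx.
  rewrite -prod_bool /sg -big_split /=; apply: eq_bigr => x _.
  by case: (u x) => /=; rewrite ?mul1r ?mulN1r.
rewrite (eq_bigr _ (fun u _ => step u)).
rewrite -(bigA_distr_bigA (fun x b => if b then - ((c x)%:R : rat) else 1)) /=.
rewrite (eq_bigr (fun x => ((~~ c x)%:R : rat))); last first.
  by move=> x _; rewrite big_bool /=; case: (c x) => /=; rewrite ?subrr ?oppr0 ?add0r.
by rewrite prod_bool inj_surj.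
Qed.


Definition colok n (t : {ffun 'I_n -> eps3}) (c : {ffun 'I_3 -> 'I_n}) : bool :=
  injectiveb c && [forall j, ~~ t (c j) j].
Definition G n (t : {ffun 'I_n -> eps3}) : rat := \sum_c (colok t c)%:R.
Definition sgn n (t : {ffun 'I_n -> eps3}) : rat := \prod_(j < 3) sg [ffun x => t x j].

Lemma card_sumr (T : finType) (A : pred T) : ((#|A|)%:R : rat) = \sum_x (x \in A)%:R.
Proof.
rewrite -sum1_card natr_sum big_mkcond /=; apply: eq_bigr => x _.
by case: (x \in A).
Qed.

Lemma natr_and (a b : bool) : ((a && b)%:R : rat) = a%:R * b%:R.
Proof. by case: a; case: b; rewrite /= ?mul1r ?mul0r. Qed.

Lemma chain n : ((L 3 n)%:R : rat) = \sum_(t : {ffun 'I_n -> eps3}) sgn t * (G t) ^+ n.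
Proof.
rewrite /L card_sumr.
under eq_bigr => M _ do rewrite inE /latin_rect natr_and -prod_bool.
under eq_bigr => M _ do under eq_bigr => j _ do rewrite ryser.
under eq_bigr => M _ do rewrite bigA_distr_bigA big_distrl /=.
rewrite exchange_big /=.
pose T (t : {ffun 'I_n -> eps3}) : {ffun 'I_3 -> {ffun 'I_n -> bool}} := [ffun j => [ffun x => t x j]].
pose T' (U : {ffun 'I_3 -> {ffun 'I_n -> bool}}) : {ffun 'I_n -> eps3} := [ffun x => [ffun j => U j x]].
rewrite (reindex T); last first.
  exists T' => [t _|U _]; apply/ffunP => x; rewrite !ffunE; apply/ffunP => j; rewrite !ffunE //.
apply: eq_bigr => t _.
under eq_bigr => M _ do rewrite big_split /= -mulrA.
rewrite -mulr_sumr; congr (_ * _).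
  by apply: eq_bigr => j _; rewrite ffunE.
transitivity (\sum_(M : 'M['I_n]_(3, n)) \prod_i ((colok t [ffun j => M j i])%:R : rat)).
  apply: eq_bigr => M _; rewrite !prod_bool -natr_and; congr (_%:R).
  apply: (congr1 nat_of_bool).
  apply/idP/idP => [/andP [/forallP H1 /forallP H2] | /forallP H].
    apply/forallP => i.
    rewrite /colok; apply/andP; split.
      by apply/injectiveP => a b; rewrite !ffunE; move: (H2 i) => /injectiveP; apply.
    by apply/forallP => j; rewrite ffunE; have := H1 j => /forallP /(_ i); rewrite /T !ffunE.
  apply/andP; split.
    by apply/forallP => j; apply/forallP => i; have /andP [_ /forallP /(_ j)] := H i; rewrite /T !ffunE.
  apply/forallP => i; have /andP [/injectiveP inj _] := H i; apply/injectiveP => a b e; apply: inj.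
  by rewrite !ffunE.
pose mx (f : {ffun 'I_n -> {ffun 'I_3 -> 'I_n}}) : 'M['I_n]_(3, n) := \matrix_(j, i) f i j.
pose xm (M : 'M['I_n]_(3, n)) : {ffun 'I_n -> {ffun 'I_3 -> 'I_n}} := [ffun i => [ffun j => M j i]].
rewrite (reindex mx); last first.
  exists xm => [f _|M _].
    by apply/ffunP => i; rewrite !ffunE; apply/ffunP => j; rewrite !ffunE mxE.
  by apply/matrixP => j i; rewrite !mxE !ffunE.
transitivity (\sum_(f : {ffun 'I_n -> {ffun 'I_3 -> 'I_n}}) \prod_i ((colok t (f i))%:R : rat)).
  apply: eq_bigr => f _; apply: eq_bigr => i _; congr (_%:R); congr colok.
  by apply/ffunP => j; rewrite ffunE mxE.
rewrite -(bigA_distr_bigA (fun (i : 'I_n) c => ((colok t c)%:R : rat))) /=.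
by rewrite prodr_const card_ord.
Qed.


Definition o0 : 'I_3 := @Ordinal 3 0 isT.
Definition o1 : 'I_3 := @Ordinal 3 1 isT.
Definition o2 : 'I_3 := @Ordinal 3 2 isT.

Lemma ord3P (P : 'I_3 -> Prop) : P o0 -> P o1 -> P o2 -> forall j, P j.
Proof.
move=> h0 h1 h2 [[|[|[|//]]] Hj].
- by have -> : Ordinal Hj = o0 by apply: val_inj.
- by have -> : Ordinal Hj = o1 by apply: val_inj.
- by have -> : Ordinal Hj = o2 by apply: val_inj.
Qed.

Lemma forall3 (P : pred 'I_3) : [forall j, P j] = [&& P o0, P o1 & P o2].
Proof.
apply/forallP/and3P => [H|[h0 h1 h2]]; first by split; apply: H.
by apply: ord3P.
Qed.

Definition mk3 (T : Type) (x y z : T) : {ffun 'I_3 -> T} :=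
  [ffun j : 'I_3 => if val j == 0%N then x else if val j == 1%N then y else z].

Lemma sum3 (T : finType) (F : {ffun 'I_3 -> T} -> rat) :
  \sum_c F c = \sum_x \sum_y \sum_z F (mk3 x y z).
Proof.
rewrite (reindex (fun p : T * (T * T) => mk3 p.1 p.2.1 p.2.2)); last first.
  exists (fun c : {ffun 'I_3 -> T} => (c o0, (c o1, c o2))) => [[x [y z]] _|c _].
    by rewrite /mk3 !ffunE.
  by apply/ffunP; apply: ord3P; rewrite /mk3 ffunE.
rewrite -(pair_bigA _ (fun x (q : T * T) => F (mk3 x q.1 q.2))) /=; apply: eq_bigr => x _.
by rewrite -(pair_bigA _ (fun y z => F (mk3 x y z))).
Qed.

Lemma inj_mk3 (T : finType) (x y z : T) :
  injectiveb (mk3 x y z) = [&& x != y, y != z & x != z].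
Proof.
apply/injectiveP/and3P => [inj|[h1 h2 h3]].
  split; apply/eqP => e.
  - by have := inj o0 o1; rewrite /mk3 !ffunE /= e => /(_ erefl) /(congr1 val).
  - by have := inj o1 o2; rewrite /mk3 !ffunE /= e => /(_ erefl) /(congr1 val).
  - by have := inj o0 o2; rewrite /mk3 !ffunE /= e => /(_ erefl) /(congr1 val).
apply: ord3P; apply: ord3P; rewrite /mk3 !ffunE /= => E //.
all: by move/eqP: E; rewrite ?(negbTE h1) ?(negbTE h2) ?(negbTE h3) // eq_sym ?(negbTE h1) ?(negbTE h2) ?(negbTE h3).
Qed.

Lemma expand (T : eqType) (x y z : T) (p q r : bool) :
  ([&& [&& x != y, y != z & x != z], p, q & r])%:R =
  (1 - (x == y)%:R - (y == z)%:R - (x == z)%:R + 2 * (x == y)%:R * (y == z)%:R)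
    * (p%:R * q%:R * r%:R) :> rat.
Proof.
case: (eqVneq x y) => [<-|h1].
  by rewrite ?eqxx /=; case: (x == z); case: p; case: q; case: r => /=; ring.
case: (eqVneq y z) => [<-|h2].
  by rewrite ?eqxx ?(negbTE h1) /=; case: p; case: q; case: r => /=; ring.
by rewrite ?(negbTE h1) ?(negbTE h2) /=; case: (x == z); case: p; case: q; case: r => /=; ring.
Qed.


Section S3.
Variable T : finType.
Definition S3 (F : T -> T -> T -> rat) := \sum_x \sum_y \sum_z F x y z.

Lemma S3_comb F1 F2 F3 F4 F5 :
  S3 F1 - S3 F2 - S3 F3 - S3 F4 + 2 * S3 F5 =
  S3 (fun x y z => F1 x y z - F2 x y z - F3 x y z - F4 x y z + 2 * F5 x y z).
Proof.
rewrite /S3 mulr_sumr -!sumrB -big_split /=; apply: eq_bigr => x _.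
rewrite mulr_sumr -!sumrB -big_split /=; apply: eq_bigr => y _.
by rewrite mulr_sumr -!sumrB -big_split.
Qed.

Lemma collapse (x : T) (Q : T -> rat) : \sum_y (x == y)%:R * Q y = Q x.
Proof.
rewrite (bigD1 x) //= eqxx mul1r big1 ?addr0 // => y /negbTE.
by rewrite eq_sym => ->; rewrite mul0r.
Qed.

Variables b0 b1 b2 : T -> rat.

Lemma E1 : S3 (fun x y z => b0 x * b1 y * b2 z) = (\sum_x b0 x) * (\sum_x b1 x) * (\sum_x b2 x).
Proof.
rewrite /S3 !mulr_suml /=; apply: eq_bigr => x _.
rewrite [b0 x * _]mulr_sumr mulr_suml /=; apply: eq_bigr => y _.
by rewrite mulr_sumr.
Qed.

Lemma E2 : S3 (fun x y z => (x == y)%:R * (b0 x * b1 y * b2 z)) =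
  (\sum_x (b0 x * b1 x)) * (\sum_x b2 x).
Proof.
rewrite /S3 mulr_suml /=; apply: eq_bigr => x _.
under eq_bigr => y _ do rewrite -mulr_sumr.
by rewrite collapse mulr_sumr.
Qed.

Lemma E3 : S3 (fun x y z => (y == z)%:R * (b0 x * b1 y * b2 z)) =
  (\sum_x b0 x) * (\sum_x (b1 x * b2 x)).
Proof.
rewrite /S3 mulr_suml /=; apply: eq_bigr => x _.
under eq_bigr => y _ do rewrite collapse.
by rewrite mulr_sumr; apply: eq_bigr => y _; rewrite mulrA.
Qed.

Lemma E4 : S3 (fun x y z => (x == z)%:R * (b0 x * b1 y * b2 z)) =
  (\sum_x (b0 x * b2 x)) * (\sum_x b1 x).
Proof.
rewrite /S3 mulr_suml /=; apply: eq_bigr => x _.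
under eq_bigr => y _ do rewrite collapse.
by rewrite mulr_sumr; apply: eq_bigr => y _ /=; ring.
Qed.

Lemma E5 : S3 (fun x y z => (x == y)%:R * (y == z)%:R * (b0 x * b1 y * b2 z)) =
  \sum_x (b0 x * b1 x * b2 x).
Proof.
rewrite /S3; apply: eq_bigr => x _.
under eq_bigr => y _ do under eq_bigr => z _ do rewrite -mulrA.
under eq_bigr => y _ do rewrite -mulr_sumr collapse.
by rewrite collapse.
Qed.
End S3.


Definition Pj (J : seq nat) (e : eps3) : bool := [forall j : 'I_3, (j.+1 \in J) ==> ~~ e j].

Lemma sum_delta_nat (T : finType) (P : pred T) (y : T) :
  (\sum_(e | P e) (y == e) = P y)%N.
Proof.
case: (boolP (P y)) => Py.
  rewrite (bigD1 y) //= eqxx big1 // => e /andP [_ /negbTE].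
  by rewrite eq_sym => ->.
by rewrite big1 // => e Pe; apply/eqP; rewrite eqb0; apply/eqP => ye; move: Py; rewrite ye Pe.
Qed.

Lemma fJ_cnt n (t : {ffun 'I_n -> eps3}) J :
  fJ (fun e => cnt t e) J = (\sum_x Pj J (t x))%N.
Proof.
rewrite /fJ /cnt exchange_big /=; apply: eq_bigr => x _.
exact: (sum_delta_nat (Pj J)).
Qed.

Lemma G_formula n (t : {ffun 'I_n -> eps3}) :
  G t = ((fJ (fun e => cnt t e) [:: 1] * fJ (fun e => cnt t e) [:: 2]
            * fJ (fun e => cnt t e) [:: 3])%N%:R
        - (fJ (fun e => cnt t e) [:: 1; 2] * fJ (fun e => cnt t e) [:: 3])%N%:R
        - (fJ (fun e => cnt t e) [:: 2; 3] * fJ (fun e => cnt t e) [:: 1])%N%:R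
        - (fJ (fun e => cnt t e) [:: 1; 3] * fJ (fun e => cnt t e) [:: 2])%N%:R
        + 2 * (fJ (fun e => cnt t e) [:: 1; 2; 3])%N%:R).
Proof.
pose b j x : rat := (~~ t x j)%:R.
rewrite /G sum3.
transitivity (S3 (fun x y z => (1 - (x == y)%:R - (y == z)%:R - (x == z)%:R + 2 * (x == y)%:R * (y == z)%:R)
    * (b o0 x * b o1 y * b o2 z))).
  rewrite /S3; apply: eq_bigr => x _; apply: eq_bigr => y _; apply: eq_bigr => z _.
  by rewrite -expand /colok inj_mk3 forall3 /mk3 !ffunE /=.
set P := fun x y z => b o0 x * b o1 y * b o2 z.
transitivity (S3 P - S3 (fun x y z => (x == y)%:R * P x y z) - S3 (fun x y z => (y == z)%:R * P x y z)
   - S3 (fun x y z => (x == z)%:R * P x y z) + 2 * S3 (fun x y z => (x == y)%:R * (y == z)%:R * P x y z)).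
  rewrite S3_comb /S3; apply: eq_bigr => x _; apply: eq_bigr => y _; apply: eq_bigr => z _.
  rewrite /P; ring.
rewrite /P E1 E2 E3 E4 E5 !fJ_cnt !natrM !natr_sum.
have HP : forall J e, Pj J e = [&& (1 \in J)%N ==> ~~ e o0, (2 \in J)%N ==> ~~ e o1 & (3 \in J)%N ==> ~~ e o2].
  by move=> J e; rewrite /Pj forall3.
have HS : forall J (F : 'I_n -> rat), (forall x, F x = (Pj J (t x))%:R) -> \sum_x F x = \sum_x (Pj J (t x))%:R.
  by move=> J F HF; apply: eq_bigr => x _; rewrite HF.
have tac : forall x, True by [].
rewrite (HS [:: 1%N] (fun x => b o0 x)); last by move=> x; rewrite HP /b /= ?andbT.
rewrite (HS [:: 2%N] (fun x => b o1 x)); last by move=> x; rewrite HP /b /= ?andbT.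
rewrite (HS [:: 3%N] (fun x => b o2 x)); last by move=> x; rewrite HP /b /= ?andbT.
rewrite (HS [:: 1%N; 2%N] (fun x => b o0 x * b o1 x)); last first.
  by move=> x; rewrite HP /b /=; case: (t x o0); case: (t x o1); rewrite /= ?mul1r ?mul0r.
rewrite (HS [:: 2%N; 3%N] (fun x => b o1 x * b o2 x)); last first.
  by move=> x; rewrite HP /b /=; case: (t x o1); case: (t x o2); rewrite /= ?mul1r ?mul0r.
rewrite (HS [:: 1%N; 3%N] (fun x => b o0 x * b o2 x)); last first.
  by move=> x; rewrite HP /b /=; case: (t x o0); case: (t x o2); rewrite /= ?mul1r ?mul0r.
rewrite (HS [:: 1%N; 2%N; 3%N] (fun x => b o0 x * b o1 x * b o2 x)); last first.
  by move=> x; rewrite HP /b /=; case: (t x o0); case: (t x o1); case: (t x o2); rewrite /= ?mul1r ?mul0r.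
ring.
Qed.


Lemma weight_sum n (t : {ffun 'I_n -> eps3}) :
  (\sum_x weight (t x) = \sum_(e : eps3) weight e * cnt t e)%N.
Proof.
rewrite /cnt.
have -> : (\sum_(e : eps3) weight e * \sum_x (t x == e) = \sum_(e : eps3) \sum_x weight e * (t x == e))%N.
  by apply: eq_bigr => e _; rewrite big_distrr.
rewrite [RHS]exchange_big /=; apply: eq_bigr => x _.
rewrite (bigD1 (t x)) //= eqxx muln1 big1 ?addn0 // => e /negbTE.
by rewrite eq_sym => ->; rewrite muln0.
Qed.

Lemma sgn_eq n (t : {ffun 'I_n -> eps3}) :
  sgn t = (-1) ^+ (\sum_(e : eps3) weight e * cnt t e)%N.
Proof.
rewrite -weight_sum /sgn /sg.
rewrite (eq_bigr (fun j => \prod_x (if t x j then -1 else 1) : rat)); last by move=> j _; apply: eq_bigr => x _; rewrite ffunE.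
rewrite exchange_big /=.
rewrite (big_morph (fun k : nat => (-1 : rat) ^+ k) (fun a b => exprD _ a b) (expr0 _)).
apply: eq_bigr => x _; rewrite /weight.
rewrite (big_morph (fun k : nat => (-1 : rat) ^+ k) (fun a b => exprD _ a b) (expr0 _)).
by apply: eq_bigr => j _; case: (t x j).
Qed.

Lemma cnt_le n (t : {ffun 'I_n -> eps3}) e : (cnt t e <= n)%N.
Proof.
rewrite /cnt -[X in (_ <= X)%N]card_ord -sum1_card.
by apply: leq_sum => x _; case: (t x == e).
Qed.

Lemma cnt_sum n (t : {ffun 'I_n -> eps3}) : (\sum_e cnt t e = n)%N.
Proof.
rewrite /cnt exchange_big /= -[RHS]card_ord -sum1_card; apply: eq_bigr => x _.
exact: (sum_delta_nat predT).
Qed.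


Definition expr (s : eps3 -> nat) : rat :=
  ( (fJ s [:: 1]%N * fJ s [:: 2]%N * fJ s [:: 3]%N)%:R
        - (fJ s [:: 1; 2]%N * fJ s [:: 3]%N)%:R
        - (fJ s [:: 2; 3]%N * fJ s [:: 1]%N)%:R
        - (fJ s [:: 1; 3]%N * fJ s [:: 2]%N)%:R
        + 2 * (fJ s [:: 1; 2; 3]%N)%:R).

Lemma fJ_ext (s1 s2 : eps3 -> nat) J : s1 =1 s2 -> fJ s1 J = fJ s2 J.
Proof. by move=> h; apply: eq_bigr => e _; rewrite h. Qed.

Lemma expr_ext (s1 s2 : eps3 -> nat) : s1 =1 s2 -> expr s1 = expr s2.
Proof. by move=> h; rewrite /expr !(fJ_ext _ h). Qed.

Unset Implicit Arguments.

Theorem mainTheorem3 (n : nat) (hn : (0 < n)%N) :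
  ((L 3 n)%:R : rat) =
  \sum_(s : {ffun eps3 -> 'I_n.+1} | (\sum_(e : eps3) (s e : nat) == n)%N)
    (-1) ^+ (\sum_(e : eps3) weight e * s e)%N
    * ((n`!)%:R / (\prod_(e : eps3) (s e)`!)%:R)
    * (( (fJ (fun e => s e) [:: 1]%N * fJ (fun e => s e) [:: 2]%N
            * fJ (fun e => s e) [:: 3]%N)%:R
        - (fJ (fun e => s e) [:: 1; 2]%N * fJ (fun e => s e) [:: 3]%N)%:R
        - (fJ (fun e => s e) [:: 2; 3]%N * fJ (fun e => s e) [:: 1]%N)%:R
        - (fJ (fun e => s e) [:: 1; 3]%N * fJ (fun e => s e) [:: 2]%N)%:R
        + 2 * (fJ (fun e => s e) [:: 1; 2; 3]%N)%:R) ^+ n).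
Proof.
rewrite chain.
pose sv (t : {ffun 'I_n -> eps3}) : {ffun eps3 -> 'I_n.+1} := [ffun e => inord (cnt t e)].
have svE : forall t e, (sv t e : nat) = cnt t e.
  by move=> t e; rewrite ffunE inordK // ltnS cnt_le.
pose Y (s : {ffun eps3 -> 'I_n.+1}) : rat :=
  (-1) ^+ (\sum_(e : eps3) weight e * s e)%N * (expr (fun e => s e)) ^+ n.
transitivity (\sum_(t : {ffun 'I_n -> eps3}) Y (sv t)).
  apply: eq_bigr => t _; rewrite sgn_eq G_formula /Y.
  have h : (fun e => cnt t e) =1 (fun e => (sv t e : nat)) by move=> e; rewrite svE.
  congr (_ ^+ _ * _).
    by apply: eq_bigr => e _; rewrite svE.
  by rewrite -(expr_ext h).
rewrite (partition_big sv (fun s : {ffun eps3 -> 'I_n.+1} => (\sum_(e : eps3) (s e : nat) == n)%N)); last first.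
  by move=> t _; apply/eqP; rewrite -[RHS](cnt_sum t); apply: eq_bigr => e _; rewrite svE.
apply: eq_bigr => s hs.
transitivity (\sum_(t | sv t == s) Y s).
  by apply: eq_bigr => t /eqP ->.
rewrite sumr_const /Y.
set k := #|_|.
have hk : k = NN n (fun e => (s e : nat)).
  rewrite /k -sum1_card /NN big_mkcond /=; apply: eq_bigr => t _.
  rewrite -[t \in _]/(sv t == s).
  have -> : (sv t == s) = [forall e, cnt t e == s e].
    apply/eqP/forallP => [<- e|H]; first by rewrite svE.
    by apply/ffunP => e; apply/val_inj; rewrite /= svE; apply/eqP.
  by case: [forall e, _].
have hp : ((\prod_(e : eps3) (s e)`!)%:R : rat) != 0.
  by rewrite pnatr_eq0 -lt0n prodn_gt0 // => e; rewrite fact_gt0.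
have hN : ((n`!)%:R / (\prod_(e : eps3) (s e)`!)%:R : rat) = (NN n (fun e => (s e : nat)))%:R.
  by rewrite -(multinom (eqP hs)) natrM mulfK.
by rewrite hN hk -[LHS]mulr_natr /expr mulrAC.
Qed.
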